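(* Let $B$ be a $\mathbb{Z}$-graded integral domain containing a field $k$. If $B$ has a cylindrical element, then there exists a field $K$ with $k\subseteq K\subseteq \operatorname{Frac}(B)$ such that $\operatorname{Frac}(B)$ is a purely transcendental extension of $K$ of transcendence degree $2$.
   Context: For a nonzero homogeneous $f\in B$, $B_{(f)}$ denotes the degree-$0$ subring of the graded ring $B_f=S^{-1}B$, $S=\{1,f,f^2,\dots\}$. A ring $C$ is a polynomial ring in one variable if there is a subring $A\subseteq C$ such that $C$ is a polynomial ring in one variable over $A$ (the zero ring counts). An element $f$ of a $\mathbb{Z}$-graded domain $B$ is cylindrical if it is nonzero, homogeneous of nonzero degree, and $B_{(f)}$ is a polynomial ring in one variable. *)

(* Defs.v *)
From HB Require Import structures.
From mathcomp Require Import all_boot all_order all_algebra fraction.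
Set Implicit Arguments. Unset Strict Implicit. Unset Printing Implicit Defensive.
Import Order.TTheory GRing.Theory Num.Theory.
Local Open Scope ring_scope.

Definition subring_set (R : comPzRingType) (S : R -> Prop) : Prop :=
  [/\ S 1, (forall x y, S x -> S y -> S (x - y)) &
           (forall x y, S x -> S y -> S (x * y))].

Definition subfield_set (R : comUnitRingType) (S : R -> Prop) : Prop :=
  subring_set S /\
  (forall x, S x -> x != 0 -> x \is a GRing.unit /\ S x^-1).

Definition is_Zgrading (B : idomainType) (Bd : int -> B -> Prop) : Prop :=
  [/\ (forall n : int, Bd n 0 /\ (forall x y, Bd n x -> Bd n y -> Bd n (x - y))),
      (forall (m n : int) (x y : B), Bd m x -> Bd n y -> Bd (m + n) (x * y)),
      (forall b : B, exists (s : seq int) (c : int -> B),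
          [/\ uniq s, (forall n, Bd n (c n)) & b = \sum_(n <- s) c n]) &
      (forall (s : seq int) (c : int -> B),
          uniq s -> (forall n, Bd n (c n)) -> \sum_(n <- s) c n = 0 ->
          forall n, n \in s -> c n = 0)].

Notation Frac B := {fraction B}.
Notation frac_of := (@FracField.tofrac _).

(* B_(f), realized inside Frac(B) (B_f embeds in Frac(B) as B is a domain):
   the degree-0 elements of B_f, i.e. the b / f^n with b homogeneous of the
   same degree as f^n. *)
Definition deg0_loc (B : idomainType) (Bd : int -> B -> Prop) (f : B)
  : Frac B -> Prop :=
  fun z => exists (n : nat) (b : B) (e : int),
       [/\ Bd e b, Bd e (f ^+ n) & z = frac_of b / (frac_of f) ^+ n].

Definition is_poly_ring_1 (F : fieldType) (C : F -> Prop) : Prop :=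
  exists (A : F -> Prop) (t : F),
    [/\ subring_set A, (forall a, A a -> C a), C t,
        (forall c, C c <-> exists p : {poly F}, (forall i, A p`_i) /\ c = p.[t]) &
        (forall p : {poly F}, (forall i, A p`_i) -> p.[t] = 0 -> p = 0)].

Definition cylindrical (B : idomainType) (Bd : int -> B -> Prop) (f : B) : Prop :=
  [/\ f != 0, (exists d : int, d != 0 /\ Bd d f) & is_poly_ring_1 (deg0_loc Bd f)].

(* evaluation of a bivariate polynomial P (outer variable Y, coefficients
   polynomials in X) at (X, Y) = (x, y) *)
Definition eval2 (F : fieldType) (P : {poly {poly F}}) (x y : F) : F :=
  (P.[y%:P]).[x].

Definition coefs_in (F : fieldType) (K : F -> Prop) (P : {poly {poly F}}) : Prop :=
  forall i j : nat, K P`_i`_j.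

Definition purely_transc_deg2 (F : fieldType) (K : F -> Prop) : Prop :=
  exists x y : F,
    (forall P, coefs_in K P -> eval2 P x y = 0 -> P = 0) /\
    (forall z : F, exists P Q, [/\ coefs_in K P, coefs_in K Q,
                                  eval2 Q x y != 0 & z = eval2 P x y / eval2 Q x y]).

(* Main.v *)
Require Import Defs.
From HB Require Import structures.
From mathcomp Require Import all_boot all_order all_algebra fraction generic_quotient.
From mathcomp Require Import zify ring.
From Stdlib Require Import ClassicalEpsilon Classical.
Set Implicit Arguments. Unset Strict Implicit. Unset Printing Implicit Defensive.
Import Order.TTheory GRing.Theory Num.Theory.
Local Open Scope ring_scope.


Lemma sum_support (R : nmodType) (c : int -> R) (s1 s2 : seq int) :
  uniq s1 -> uniq s2 -> {subset s1 <= s2} ->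
  (forall n, n \in s2 -> n \notin s1 -> c n = 0) ->
  \sum_(n <- s2) c n = \sum_(n <- s1) c n.
Proof.
move=> u1 u2 sub H.
rewrite (bigID (fun n => n \in s1)) /=.
rewrite [X in _ + X = _]big_seq_cond [X in _ + X = _]big1 ?addr0; last first.
  by move=> n /andP[h2 h1]; apply: H.
rewrite -big_filter; apply: perm_big; apply: uniq_perm.
- exact: filter_uniq.
- exact: u1.
move=> n; rewrite mem_filter; apply/andP/idP => [[]//|h]; split => //; exact: sub.
Qed.

Section Grading.
Variables (B : idomainType) (Bd : int -> B -> Prop).
Hypothesis hG : is_Zgrading Bd.

Lemma Bd0 n : Bd n 0. Proof. by case: hG => h _ _ _; case: (h n). Qed.
Lemma BdB n x y : Bd n x -> Bd n y -> Bd n (x - y).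
Proof. by case: hG => h _ _ _; case: (h n) => _; apply. Qed.
Lemma BdN n x : Bd n x -> Bd n (- x).
Proof. by move=> h; rewrite -sub0r; apply: BdB => //; apply: Bd0. Qed.
Lemma BdD n x y : Bd n x -> Bd n y -> Bd n (x + y).
Proof. by move=> hx hy; rewrite -[y]opprK; apply: BdB => //; apply: BdN. Qed.
Lemma BdM m n x y : Bd m x -> Bd n y -> Bd (m + n) (x * y).
Proof. by case: hG => _ h _ _; apply: h. Qed.
Lemma Bd_sum n (I : Type) (r : seq I) (P : pred I) (F : I -> B) :
  (forall i, P i -> Bd n (F i)) -> Bd n (\sum_(i <- r | P i) F i).
Proof. by move=> h; apply: big_ind => //; [apply: Bd0 | apply: BdD]. Qed.

Lemma ex_rep b : exists sc : seq int * (int -> B),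
  [/\ uniq sc.1, forall n, Bd n (sc.2 n) & b = \sum_(n <- sc.1) sc.2 n].
Proof.
case: hG => _ _ h _; case: (h b) => s [c [u hc e]].
by exists (s, c).
Qed.

Definition grep b := proj1_sig (constructive_indefinite_description _ (ex_rep b)).
Definition gcomp b n := if n \in (grep b).1 then (grep b).2 n else 0.

Lemma repP b : [/\ uniq (grep b).1, forall n, Bd n ((grep b).2 n) &
   b = \sum_(n <- (grep b).1) (grep b).2 n].
Proof. exact: (proj2_sig (constructive_indefinite_description _ (ex_rep b))). Qed.

Lemma comp_hom b n : Bd n (gcomp b n).
Proof. rewrite /gcomp; case: ifP => _; [by case: (repP b) | exact: Bd0]. Qed.

Lemma comp_out b n : n \notin (grep b).1 -> gcomp b n = 0.
Proof. by rewrite /gcomp => /negPf ->. Qed.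

Lemma comp_sum b : b = \sum_(n <- (grep b).1) gcomp b n.
Proof.
case: (repP b) => _ _ e; rewrite {1}e; apply: eq_big_seq => n hn.
by rewrite /gcomp hn.
Qed.

Lemma comp_uniq b (s : seq int) (c : int -> B) :
  uniq s -> (forall n, Bd n (c n)) -> b = \sum_(n <- s) c n ->
  forall n, gcomp b n = if n \in s then c n else 0.
Proof.
move=> us hc eb n.
case: hG => _ _ _ hU.
case: (repP b) => u0 hc0 e0.
set S := undup (s ++ (grep b).1).
set c' := fun n => (if n \in s then c n else 0) - gcomp b n.
have uS : uniq S by apply: undup_uniq.
have hc' : forall n, Bd n (c' n).
  move=> m; rewrite /c'; apply: BdB; last exact: comp_hom.
  by case: ifP => _; [apply: hc | apply: Bd0].
have s0 : \sum_(m <- S) c' m = 0.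
  rewrite /c' sumrB.
  rewrite (@sum_support _ _ s S) //; last first.
  - by move=> m _ /negPf ->.
  - by move=> m hm; rewrite mem_undup mem_cat hm.
  rewrite (@sum_support _ _ (grep b).1 S) //; last first.
  - by move=> m _ hm; rewrite comp_out.
  - by move=> m hm; rewrite mem_undup mem_cat hm orbT.
  rewrite -comp_sum (eq_big_seq c) -?eb ?subrr //.
  by move=> m hm; rewrite hm.
have := hU S c' uS hc' s0 n.
case: (boolP (n \in S)) => hn.
  by move/(_ isT)/eqP; rewrite /c' subr_eq0 => /eqP <-.
move=> _; move: hn; rewrite mem_undup mem_cat negb_or => /andP[h1 h2].
by rewrite (negPf h1) comp_out.
Qed.

Lemma comp_homE m x : Bd m x -> forall n, gcomp x n = if n == m then x else 0.
Proof.
move=> hx n.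
rewrite (@comp_uniq x [:: m] (fun n => if n == m then x else 0)).
- case: (eqVneq n m) => [->|h]; first by rewrite mem_seq1 eqxx. by rewrite mem_seq1 (negPf h).
- by [].
- by move=> k; case: eqP => [->//|_]; apply: Bd0.
- by rewrite big_seq1 eqxx.
Qed.

Lemma comp0 n : gcomp 0 n = 0.
Proof. by rewrite (@comp_homE 0) ?if_same //; apply: Bd0. Qed.

Lemma compD x y n : gcomp (x + y) n = gcomp x n + gcomp y n.
Proof.
set S := undup ((grep x).1 ++ (grep y).1).
rewrite (@comp_uniq (x + y) S (fun n => gcomp x n + gcomp y n)).
- case: ifP => // hn; move: hn; rewrite mem_undup mem_cat => /negbT.
  by rewrite negb_or => /andP[h1 h2]; rewrite !comp_out ?addr0.
- exact: undup_uniq.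
- by move=> k; apply: BdD; apply: comp_hom.
rewrite big_split /=.
rewrite (@sum_support _ _ (grep x).1 S); first last.
- by move=> m _ hm; rewrite comp_out.
- by move=> m hm; rewrite mem_undup mem_cat hm.
- exact: undup_uniq.
- by case: (repP x).
rewrite (@sum_support _ _ (grep y).1 S); first last.
- by move=> m _ hm; rewrite comp_out.
- by move=> m hm; rewrite mem_undup mem_cat hm orbT.
- exact: undup_uniq.
- by case: (repP y).
by rewrite -!comp_sum.
Qed.

Lemma comp_big (I : Type) (r : seq I) (P : pred I) (F : I -> B) n :
  gcomp (\sum_(i <- r | P i) F i) n = \sum_(i <- r | P i) gcomp (F i) n.
Proof.
by apply: (big_morph (fun x => gcomp x n)) => [x y|]; [apply: compD | apply: comp0].
Qed.

Lemma hom_indep k (a : 'I_k -> B) (m : 'I_k -> int) :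
  (forall i, Bd (m i) (a i)) -> injective m -> \sum_i a i = 0 -> forall j, a j = 0.
Proof.
move=> ha im s0 j.
have := congr1 (fun x => gcomp x (m j)) s0; rewrite /= comp0 comp_big.
rewrite (eq_bigr (fun i => if i == j then a j else 0)).
  by rewrite -big_mkcond big_pred1_eq.
move=> i _; rewrite (comp_homE (ha i)).
case: (eqVneq i j) => [->|nij]; first by rewrite eqxx.
by case: eqP => // /im e; rewrite e eqxx in nij.
Qed.

End Grading.


Lemma sum_only1 (R : nmodType) (s : seq int) (T : int) (F : int -> R) :
  uniq s -> T \in s -> (forall n, n \in s -> n != T -> F n = 0) ->
  \sum_(n <- s) F n = F T.
Proof.
move=> us hT h; rewrite (big_rem T) //= big1_seq ?addr0 //.
move=> n /andP[_]; rewrite (mem_rem_uniq _ us) inE => /andP[nT ns].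
exact: h.
Qed.

Lemma seq_argmax (f : int -> int) (L : seq int) : L != [::] ->
  exists2 T, T \in L & forall n, n \in L -> f n <= f T.
Proof.
elim: L => // a L IH _.
case: (eqVneq L [::]) => [->|nL].
  by exists a; rewrite ?inE // => n; rewrite inE => /eqP ->.
case: (IH nL) => T hT hm.
case: (leP (f a) (f T)) => h.
  exists T; first by rewrite inE hT orbT.
  by move=> n; rewrite inE => /orP[/eqP->//|]; apply: hm.
exists a; first by rewrite inE eqxx.
move=> n; rewrite inE => /orP[/eqP->//|/hm hn]. 
exact: (le_trans hn (ltW h)).
Qed.

Section Grading2.
Variables (B : idomainType) (Bd : int -> B -> Prop).
Hypothesis hG : is_Zgrading Bd.

Local Notation comp := (gcomp hG).
Local Notation rep := (grep hG).

Lemma comp_in x n : comp x n != 0 -> n \in (rep x).1.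
Proof. by apply: contraR => h; rewrite comp_out. Qed.

Lemma Bd1 : (exists x m, x != 0 /\ Bd m x) -> Bd 0 1.
Proof.
case=> x [m [x0 hx]].
set s := (rep 1).1.
have us : uniq s by case: (repP hG 1).
have z : forall n, n \in s -> n != 0 -> comp 1 n = 0.
  move=> n hn n0.
  have e : x = \sum_(j <- map (fun n => m + n) s) x * comp 1 (j - m).
    rewrite big_map (eq_bigr (fun n => x * comp 1 n)); last first.
      by move=> i _; congr (_ * comp 1 _); ring.
    by rewrite -mulr_sumr -comp_sum mulr1.
  have um : uniq (map (fun n => m + n) s).
    by rewrite map_inj_uniq // => a b; apply: addrI.
  have hc : forall j, Bd j (x * comp 1 (j - m)).
    by move=> j; have := BdM hG hx (comp_hom hG 1 (j - m)); rewrite addrC subrK.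
  have := comp_uniq hG um hc e (m + n).
  rewrite (comp_homE hG hx) mem_map; last by move=> a b; apply: addrI.
  rewrite hn.
  have -> : (m + n == m) = false by apply/negbTE; rewrite -subr_eq0 addrC addKr.
  have -> : m + n - m = n by ring.
  by move=> h; apply/eqP; move: (esym h) => /eqP; rewrite mulf_eq0 (negPf x0).
rewrite (comp_sum hG 1) big_seq_cond; apply: (Bd_sum hG) => // n /andP[hn _].
case: (eqVneq n 0) => [->|n0]; first exact: (comp_hom hG).
by rewrite z //; apply: (Bd0 hG).
Qed.

Lemma BdX m x n : Bd 0 1 -> Bd m x -> Bd (m *+ n) (x ^+ n).
Proof.
move=> h1 hx; elim: n => [|n IH]; first by rewrite expr0 mulr0n.
by rewrite exprS mulrS; apply: (BdM hG).
Qed.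

Lemma comp_mul x y n : comp (x * y) n =
  \sum_(i <- (rep x).1) \sum_(j <- (rep y).1)
     (if n == i + j then comp x i * comp y j else 0).
Proof.
transitivity (comp ((\sum_(i <- (rep x).1) comp x i) *
   (\sum_(j <- (rep y).1) comp y j)) n); first by rewrite -!comp_sum.
rewrite mulr_suml comp_big; apply: eq_bigr => i _.
rewrite mulr_sumr comp_big; apply: eq_bigr => j _.
by rewrite (comp_homE hG (BdM hG (comp_hom hG x i) (comp_hom hG y j))).
Qed.

Lemma extremal (sg : int) x : x != 0 ->
  exists T, comp x T != 0 /\ forall n, comp x n != 0 -> sg * n <= sg * T.
Proof.
move=> x0.
set L := [seq n <- (rep x).1 | comp x n != 0].
have nL : L != [::].
  apply: contraNneq x0 => eL; rewrite (comp_sum hG x) big1_seq //.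
  move=> n /andP[_ hn]; apply/eqP; apply: contraT => h.
  have : n \in L by rewrite mem_filter h hn.
  by rewrite eL.
case: (seq_argmax (fun n => sg * n) nL) => T; rewrite mem_filter => /andP[hT _] hm.
exists T; split => // n hn; apply: hm.
by rewrite mem_filter hn comp_in.
Qed.

Lemma comp_mul_top (sg : int) x y Tx Ty : sg != 0 ->
  comp x Tx != 0 -> comp y Ty != 0 ->
  (forall n, comp x n != 0 -> sg * n <= sg * Tx) ->
  (forall n, comp y n != 0 -> sg * n <= sg * Ty) ->
  comp (x * y) (Tx + Ty) = comp x Tx * comp y Ty.
Proof.
move=> s0 hx hy mx my.
rewrite comp_mul.
have ux : uniq (rep x).1 by case: (repP hG x).
have uy : uniq (rep y).1 by case: (repP hG y).
have key : forall i j, Tx + Ty == i + j -> comp x i != 0 -> comp y j != 0 ->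
    i = Tx /\ j = Ty.
  move=> i j /eqP e hi hj.
  have := mx _ hi; have := my _ hj.
  have e2 : sg * Tx + sg * Ty = sg * i + sg * j by rewrite -!mulrDr e.
  move=> h1 h2.
  have ei : sg * i = sg * Tx by lia.
  have ej : sg * j = sg * Ty by lia.
  by split; apply: (mulfI s0).
rewrite (@sum_only1 _ _ Tx) //; last 2 first.
- exact: comp_in.
- move=> i _ iT; rewrite big1_seq // => j _.
  case: ifP => // e.
  case: (eqVneq (comp x i) 0) => [->|hi]; first by rewrite mul0r.
  case: (eqVneq (comp y j) 0) => [->|hj]; first by rewrite mulr0.
  by case: (key _ _ e hi hj) => eiT; rewrite eiT eqxx in iT.
rewrite (@sum_only1 _ _ Ty) //; first by rewrite eqxx.
- exact: comp_in.
move=> j _ jT; case: ifP => // e.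
case: (eqVneq (comp y j) 0) => [->|hj]; first by rewrite mulr0.
by case: (key _ _ e hx hj) => _ ejT; rewrite ejT eqxx in jT.
Qed.

Lemma comp1 : Bd 0 1 -> forall n, comp 1 n = if n == 0 then 1 else 0.
Proof. by move=> h n; apply: comp_homE. Qed.

Lemma unit_hom u v : Bd 0 1 -> u * v = 1 -> exists m, Bd m u.
Proof.
move=> h1 uv.
have u0 : u != 0 by apply: contra_eq_neq uv => ->; rewrite mul0r eq_sym oner_neq0.
have v0 : v != 0 by apply: contra_eq_neq uv => ->; rewrite mulr0 eq_sym oner_neq0.
case: (extremal 1 u0) => Tu [hTu mTu].
case: (extremal (-1) u0) => Su [hSu mSu].
case: (extremal 1 v0) => Tv [hTv mTv].
case: (extremal (-1) v0) => Sv [hSv mSv].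
have eT : Tu + Tv = 0.
  have := comp_mul_top (oner_neq0 _) hTu hTv mTu mTv.
  rewrite uv comp1 //; case: eqP => // _ /esym /eqP.
  by rewrite mulf_eq0 (negPf hTu) (negPf hTv).
have eS : Su + Sv = 0.
  have := comp_mul_top (isT : (-1 : int) != 0) hSu hSv mSu mSv.
  rewrite uv comp1 //; case: eqP => // _ /esym /eqP.
  by rewrite mulf_eq0 (negPf hSu) (negPf hSv).
have h1u := mTu _ hSu; have h1v := mTv _ hSv.
exists Tu.
rewrite (comp_sum hG u) big_seq_cond; apply: (Bd_sum hG) => // n /andP[hn _].
case: (eqVneq (comp u n) 0) => [->|cn]; first exact: (Bd0 hG).
have a1 := mTu _ cn; have a2 := mSu _ cn.
have -> : Tu = n by lia.
exact: (comp_hom hG).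
Qed.

Lemma field_deg0 (k : B -> Prop) : subfield_set k -> Bd 0 1 ->
  forall a, k a -> Bd 0 a.
Proof.
move=> [[k1 kB kM] kinv] h1 a ka.
have k0 : k 0 by rewrite -(subrr 1); apply: kB.
have kunit : forall x, k x -> x != 0 -> exists m, Bd m x.
  move=> x kx x0; case: (kinv x kx x0) => xu _.
  by apply: (unit_hom (v := x^-1)) => //; rewrite mulrV.
case: (eqVneq a 0) => [->|a0]; first exact: (Bd0 hG).
case: (kunit a ka a0) => m hm.
case: (eqVneq m 0) => [<-//|m0].
have k1a : k (1 + a) by rewrite -[a]opprK; apply: (kB) => //; rewrite -sub0r; apply: (kB).
case: (eqVneq (1 + a) 0) => [e|n0].
  have -> : a = - 1 by apply/eqP; rewrite -addr_eq0 addrC e.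
  exact: (BdN hG h1).
case: (kunit _ k1a n0) => m' hm'.
have c0 := comp_homE hG hm' 0.
rewrite compD comp1 // eqxx (comp_homE hG hm) (eq_sym 0) (negPf m0) addr0 in c0.
have c1 := comp_homE hG hm' m.
rewrite compD comp1 // (negPf m0) (comp_homE hG hm) eqxx add0r in c1.
move: c0 c1; case: eqP => [<-|_] c0 c1.
  have : a = 0 by apply: (addrI 1); rewrite addr0 -c0.
  by move/eqP; rewrite (negPf a0).
by move/eqP: c0; rewrite oner_eq0.
Qed.

End Grading2.


Lemma frac_scale (F : fieldType) (x y w : F) : w != 0 -> x / y = (x * w) / (y * w).
Proof. by move=> w0; rewrite invfM mulrACA divff // mulr1. Qed.

Section Frac.
Variables (B : idomainType) (Bd : int -> B -> Prop).
Hypothesis hG : is_Zgrading Bd.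
Hypothesis h1 : Bd 0 1.

Local Notation F := {fraction B}.
Local Notation iota := (@FracField.tofrac B).

Definition HF (m : int) (z : F) := exists a b e1 e2,
  [/\ Bd e1 a, Bd e2 b, b != 0, m = e1 - e2 & z = iota a / iota b].

Lemma iota0 (b : B) : (iota b == 0) = (b == 0).
Proof. exact: tofrac_eq0. Qed.

Lemma HF_hom m a : Bd m a -> HF m (iota a).
Proof.
move=> ha; exists a, 1, m, 0; split => //; first exact: oner_neq0.
  by rewrite subr0.
by rewrite rmorph1 divr1.
Qed.

Lemma HF0 m : HF m 0.
Proof. by have := HF_hom (Bd0 hG m); rewrite rmorph0. Qed.

Lemma HF1 : HF 0 1.
Proof. by have := HF_hom h1; rewrite rmorph1. Qed.

Lemma HF_mul m n z w : HF m z -> HF n w -> HF (m + n) (z * w).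
Proof.
move=> [a [b [e1 [e2 [ha hb b0 em ->]]]]] [a' [b' [e1' [e2' [ha' hb' b0' en ->]]]]].
exists (a * a'), (b * b'), (e1 + e1'), (e2 + e2'); split.
- exact: (BdM hG).
- exact: (BdM hG).
- by rewrite mulf_neq0.
- by rewrite em en; ring.
by rewrite !rmorphM mulf_div.
Qed.

Lemma HF_inv m z : HF m z -> HF (- m) z^-1.
Proof.
move=> [a [b [e1 [e2 [ha hb b0 em ->]]]]].
case: (eqVneq a 0) => [->|a0]; first by rewrite rmorph0 mul0r invr0; apply: HF0.
exists b, a, e2, e1; split => //; first by rewrite em; ring.
by rewrite invf_div.
Qed.

Lemma HF_add m z w : HF m z -> HF m w -> HF m (z + w).
Proof.
move=> [a [b [e1 [e2 [ha hb b0 em ->]]]]] [a' [b' [e1' [e2' [ha' hb' b0' en ->]]]]].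
exists (a * b' + a' * b), (b * b'), (e1 + e2'), (e2 + e2'); split.
- apply: (BdD hG); first exact: (BdM hG).
  have -> : e1 + e2' = e1' + e2 by lia.
  exact: (BdM hG).
- exact: (BdM hG).
- by rewrite mulf_neq0.
- by rewrite em; ring.
by rewrite addf_div ?iota0 // !rmorphD !rmorphM.
Qed.

Lemma HF_opp m z : HF m z -> HF m (- z).
Proof.
move=> [a [b [e1 [e2 [ha hb b0 em ->]]]]].
exists (- a), b, e1, e2; split => //; first exact: (BdN hG).
by rewrite rmorphN mulNr.
Qed.

Lemma HF_sub m z w : HF m z -> HF m w -> HF m (z - w).
Proof. by move=> hz hw; apply: HF_add => //; apply: HF_opp. Qed.

Lemma HF_exp m z n : HF m z -> HF (m *+ n) (z ^+ n).
Proof.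
move=> hz; elim: n => [|n IH]; first by rewrite expr0 mulr0n; apply: HF1.
by rewrite exprS mulrS; apply: HF_mul.
Qed.

Lemma HF_sum m (I : Type) (r : seq I) (P : pred I) (G : I -> F) :
  (forall i, P i -> HF m (G i)) -> HF m (\sum_(i <- r | P i) G i).
Proof. by move=> h; apply: big_ind => //; [apply: HF0 | apply: HF_add]. Qed.

Lemma HF_expz m z (q : int) : HF m z -> HF (m * q) (z ^ q).
Proof.
move=> hz; case: q => n.
  rewrite -exprnP. have -> : m * (Posz n) = m *+ n by rewrite -mulr_natr natz.
  exact: HF_exp.
rewrite NegzE -exprnN.
have -> : m * - (Posz n.+1) = - (m *+ n.+1) by rewrite mulrN -mulr_natr natz.
by apply: HF_inv; apply: HF_exp.
Qed.

Lemma common_denom n (z : nat -> F) (m : nat -> int) :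
  (forall i, (i < n)%N -> HF (m i) (z i)) ->
  exists b e (a : nat -> B), [/\ b != 0, Bd e b &
     forall i, (i < n)%N -> Bd (m i + e) (a i) /\ z i = iota (a i) / iota b].
Proof.
elim: n => [|n IH] h.
  by exists 1, 0, (fun _ => 0); split => //; apply: oner_neq0.
case: IH => [i hi|b [e [a [b0 hb ha]]]]; first by apply: h; apply: ltnW.
case: (h n (ltnSn n)) => [a' [b' [e1 [e2 [ha' hb' b0' em ez]]]]].
exists (b * b'), (e + e2), (fun i => if (i < n)%N then a i * b' else a' * b).
split.
- by rewrite mulf_neq0.
- exact: (BdM hG).
move=> i; rewrite ltnS leq_eqVlt => /orP[/eqP ->|hi].
  rewrite ltnn; split.
    have -> : m n + (e + e2) = e1 + e by rewrite em; ring.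
    exact: (BdM hG).
  rewrite ez (@frac_scale _ _ _ (iota b)) ?iota0 // !rmorphM.
  by rewrite [iota b * _]mulrC.
rewrite hi; case: (ha i hi) => hai ->; split.
  by rewrite addrA; apply: (BdM hG).
by rewrite (@frac_scale _ _ _ (iota b')) ?iota0 // !rmorphM.
Qed.

Lemma HF_indep k (z : nat -> F) (m : nat -> int) :
  (forall i, (i < k)%N -> HF (m i) (z i)) ->
  (forall i j, (i < k)%N -> (j < k)%N -> m i = m j -> i = j) ->
  \sum_(i < k) z i = 0 -> forall j, (j < k)%N -> z j = 0.
Proof.
move=> hz im s0 j hj.
case: (common_denom hz) => b [e [a [b0 hb ha]]].
have s1 : \sum_(i < k) a i = 0.
  apply/eqP; rewrite -iota0; apply/eqP.
  have : \sum_(i < k) z i * iota b = 0 by rewrite -mulr_suml s0 mul0r.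
  rewrite rmorph_sum => e0; rewrite -[RHS]e0; apply: eq_bigr => i _ /=.
  by case: (ha i (ltn_ord i)) => _ ->; rewrite divfK ?iota0.
have := @hom_indep B Bd hG k (fun i => a i) (fun i => m i + e) _ _ s1 (Ordinal hj).
case: (ha j hj) => _ -> /= ->; first by rewrite rmorph0 mul0r.
- by move=> i; case: (ha i (ltn_ord i)).
- by move=> i i' /addIr /im e'; apply: val_inj; apply: e'.
Qed.

End Frac.


Section SR.
Variables (R : comNzRingType) (S : R -> Prop).
Hypothesis hS : subring_set S.

Lemma sr1 : S 1. Proof. by case: hS. Qed.
Lemma srB x y : S x -> S y -> S (x - y). Proof. by case: hS => _ h _; apply: h. Qed.
Lemma srM x y : S x -> S y -> S (x * y). Proof. by case: hS => _ _ h; apply: h. Qed.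
Lemma sr0 : S 0. Proof. by rewrite -(subrr 1); apply: srB; apply: sr1. Qed.
Lemma srN x : S x -> S (- x). Proof. by move=> h; rewrite -sub0r; apply: srB => //; apply: sr0. Qed.
Lemma srD x y : S x -> S y -> S (x + y).
Proof. by move=> hx hy; rewrite -[y]opprK; apply: srB => //; apply: srN. Qed.
Lemma sr_sum (I : Type) (r : seq I) (P : pred I) (G : I -> R) :
  (forall i, P i -> S (G i)) -> S (\sum_(i <- r | P i) G i).
Proof. by move=> h; apply: big_ind => //; [apply: sr0 | apply: srD]. Qed.
Lemma sr_nat (b : bool) : S b%:R.
Proof. by case: b; [apply: sr1 | apply: sr0]. Qed.
Lemma srX x n : S x -> S (x ^+ n).
Proof. by move=> h; elim: n => [|n IH]; [rewrite expr0; apply: sr1 | rewrite exprS; apply: srM]. Qed.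

Definition pover (p : {poly R}) := forall i, S p`_i.

Lemma pover_ring : subring_set pover.
Proof.
split.
- by move=> i; rewrite coef1; apply: sr_nat.
- by move=> p q hp hq i; rewrite coefB; apply: srB.
- move=> p q hp hq i; rewrite coefM; apply: sr_sum => j _; exact: srM.
Qed.

Lemma poverC c : S c -> pover c%:P.
Proof. by move=> h i; rewrite coefC; case: ifP => _ //; apply: sr0. Qed.

Lemma poverX : pover 'X.
Proof. by move=> i; rewrite coefX; apply: sr_nat. Qed.

End SR.

Section RF.
Variables (F : fieldType) (K : F -> Prop) (x y : F).
Hypothesis hK : subfield_set K.

Lemma hKr : subring_set K. Proof. by case: hK. Qed.
Lemma hK2 : subring_set (pover (pover K)).
Proof. by apply: pover_ring; apply: pover_ring; apply: hKr. Qed.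

Lemma eval2D P Q : eval2 (P + Q) x y = eval2 P x y + eval2 Q x y.
Proof. by rewrite /eval2 !hornerD. Qed.
Lemma eval2M P Q : eval2 (P * Q) x y = eval2 P x y * eval2 Q x y.
Proof. by rewrite /eval2 !hornerM. Qed.
Lemma eval2_1 : eval2 1 x y = 1.
Proof. by rewrite /eval2 !hornerC. Qed.
Lemma eval2C c : eval2 c%:P%:P x y = c.
Proof. by rewrite /eval2 !hornerC. Qed.
Lemma eval2Cp p : eval2 p%:P x y = p.[x].
Proof. by rewrite /eval2 !hornerC. Qed.
Lemma eval2X : eval2 'X x y = y.
Proof. by rewrite /eval2 hornerX hornerC. Qed.

Definition RF (z : F) := exists P Q, [/\ coefs_in K P, coefs_in K Q,
  eval2 Q x y != 0 & z = eval2 P x y / eval2 Q x y].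

Lemma RF_eval P : coefs_in K P -> RF (eval2 P x y).
Proof.
move=> hP; exists P, 1; split => //.
- exact: (sr1 hK2).
- by rewrite eval2_1 oner_neq0.
- by rewrite eval2_1 divr1.
Qed.

Lemma RF_K c : K c -> RF c.
Proof.
move=> hc; rewrite -(eval2C c); apply: RF_eval.
by apply: (poverC (pover_ring hKr)); apply: (poverC hKr).
Qed.

Lemma RF_x : RF x.
Proof.
rewrite -[x in RF x]hornerX -eval2Cp; apply: RF_eval.
by apply: (poverC (pover_ring hKr)); apply: (poverX hKr).
Qed.

Lemma RF_y : RF y.
Proof. by rewrite -eval2X; apply: RF_eval; apply: (poverX (pover_ring hKr)). Qed.

Lemma RF_add z w : RF z -> RF w -> RF (z + w).
Proof.
move=> [P [Q [hP hQ q0 ->]]] [P' [Q' [hP' hQ' q0' ->]]].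
exists (P * Q' + P' * Q), (Q * Q'); split.
- by apply: (srD hK2); apply: (srM hK2).
- exact: (srM hK2).
- by rewrite eval2M mulf_neq0.
by rewrite addf_div // eval2D !eval2M.
Qed.

Lemma RF_mul z w : RF z -> RF w -> RF (z * w).
Proof.
move=> [P [Q [hP hQ q0 ->]]] [P' [Q' [hP' hQ' q0' ->]]].
exists (P * P'), (Q * Q'); split.
- exact: (srM hK2).
- exact: (srM hK2).
- by rewrite eval2M mulf_neq0.
by rewrite !eval2M mulf_div.
Qed.

Lemma RF_inv z : RF z -> RF z^-1.
Proof.
move=> [P [Q [hP hQ q0 ->]]].
case: (eqVneq (eval2 P x y) 0) => [->|p0].
  by rewrite mul0r invr0; apply: RF_K; apply: (sr0 hKr).
by exists Q, P; split => //; rewrite invf_div.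
Qed.

Lemma RF_opp z : RF z -> RF (- z).
Proof.
move=> hz; rewrite -mulN1r; apply: RF_mul => //; apply: RF_K.
by apply: (srN hKr); apply: (sr1 hKr).
Qed.

Lemma RF_sum (I : Type) (r : seq I) (P : pred I) (G : I -> F) :
  (forall i, P i -> RF (G i)) -> RF (\sum_(i <- r | P i) G i).
Proof.
move=> h; apply: big_ind => //; last exact: RF_add.
by apply: RF_K; apply: (sr0 hKr).
Qed.

Lemma RF_expz z (q : int) : RF z -> RF (z ^ q).
Proof.
move=> hz.
have hn : forall n : nat, RF (z ^+ n).
  elim=> [|n IH]; first by rewrite expr0; apply: RF_K; apply: (sr1 hKr).
  by rewrite exprS; apply: RF_mul.
case: q => n; first by rewrite -exprnP.
by rewrite NegzE -exprnN; apply: RF_inv.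
Qed.

End RF.


Lemma arith (d e2 : int) : d != 0 -> exists L M : nat, e2 * (absz d)%:Z + d * L%:Z = d * M%:Z.
Proof.
move=> d0.
case: d d0 => n d0.
  case: (leP 0 e2) => he.
    by exists 0%N, (absz e2); lia.
  by exists (absz e2), 0%N; lia.
case: (leP e2 0) => he.
  by exists 0%N, (absz e2); lia.
by exists (absz e2), 0%N; lia.
Qed.

Lemma ex_min (P : nat -> Prop) : (exists n, P n) ->
  exists n, P n /\ forall m, P m -> (n <= m)%N.
Proof.
move=> [n hn]; elim/ltn_ind: n hn => n IH hn.
case: (classic (exists m, (m < n)%N /\ P m)) => [[m [lt pm]]|nex].
  exact: IH m lt pm.
exists n; split => // m pm; rewrite leqNgt; apply/negP => lt.
by apply: nex; exists m.
Qed.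

Lemma frac_repr (B : idomainType) (z : {fraction B}) :
  exists a b : B, b != 0 /\ z = (FracField.tofrac a) / (FracField.tofrac b).
Proof.
elim/quotW: z => x.
exists (\n_x), (\d_x); split; first exact: denom_ratioP.
have hd : (FracField.tofrac \d_x) != 0 by rewrite tofrac_eq0 denom_ratioP.
apply: (mulIf hd); rewrite divfK //.
unlock (@FracField.tofrac B).
rewrite [X in X = _]piE.
apply/eqmodP; rewrite /= FracField.equivfE /FracField.mulf.
by rewrite !numden_Ratio ?mulr1 ?oner_eq0 ?mulf_neq0 ?denom_ratioP // mulrC.
Qed.

Lemma frac_simpl (F: fieldType) (a b X Y : F) : b != 0 -> X != 0 -> Y != 0 ->
  a / b = (a * X) / Y / ((b * X) / Y).
Proof. move=> b0 X0 Y0; field. by rewrite b0 X0 Y0. Qed.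

Section Main.
Variables (B : idomainType) (Bd : int -> B -> Prop) (k : B -> Prop) (f : B) (d : int).
Local Notation F := {fraction B}.
Local Notation iota := (@FracField.tofrac B).
Variables (A : F -> Prop) (t : F).
Hypotheses (hG : is_Zgrading Bd) (hk : subfield_set k) (f0 : f != 0) (d0 : d != 0)
  (hfd : Bd d f) (hA : subring_set A) (AC : forall a, A a -> deg0_loc Bd f a)
  (Ct : deg0_loc Bd f t)
  (Ciff : forall c, deg0_loc Bd f c <-> exists p : {poly F}, (forall i, A p`_i) /\ c = p.[t])
  (Atr : forall p : {poly F}, (forall i, A p`_i) -> p.[t] = 0 -> p = 0).

Lemma h1 : Bd 0 1.
Proof. by apply: (Bd1 hG); exists f, d. Qed.

Definition K z := exists a b, [/\ A a, A b, b != 0 & z = a / b].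

Lemma K_subfield : subfield_set K.
Proof.
split; first split.
- exists 1, 1; split; [exact: (sr1 hA) | exact: (sr1 hA) | exact: oner_neq0 | by rewrite divr1].
- move=> z w [a [b [ha hb b0 ->]]] [a' [b' [ha' hb' b0' ->]]].
  exists (a * b' + (- a') * b), (b * b'); split.
  + by apply: (srD hA); apply: (srM hA) => //; apply: (srN hA).
  + exact: (srM hA).
  + by rewrite mulf_neq0.
  + by rewrite -mulNr addf_div.
- move=> z w [a [b [ha hb b0 ->]]] [a' [b' [ha' hb' b0' ->]]].
  exists (a * a'), (b * b'); split; try exact: (srM hA).
  + by rewrite mulf_neq0.
  + by rewrite mulf_div.
- move=> z [a [b [ha hb b0 ->]]] z0; split; first by rewrite unitfE.
  exists b, a; split => //; last by rewrite invf_div.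
  by apply: contraNneq z0 => ->; rewrite mul0r.
Qed.

Lemma A_K a : A a -> K a.
Proof. by move=> ha; exists a, 1; split => //; [exact: (sr1 hA) | exact: oner_neq0 | rewrite divr1]. Qed.

Lemma deg0_HF z : deg0_loc Bd f z -> HF Bd 0 z.
Proof.
move=> [n [b [e [hb hfn ->]]]].
exists b, (f ^+ n), e, e; split => //; first by rewrite expf_neq0.
  by rewrite subrr.
by rewrite rmorphXn.
Qed.

Lemma K_HF z : K z -> HF Bd 0 z.
Proof.
move=> [a [b [ha hb b0 ->]]].
have := HF_mul hG (deg0_HF (AC ha)) (HF_inv hG h1 (deg0_HF (AC hb))).
by rewrite oppr0 addr0.
Qed.

Lemma pK_HF p : pover K p -> HF Bd 0 p.[t].
Proof.
move=> hp; rewrite horner_coef; apply: (HF_sum hG h1) => i _.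
have := HF_mul hG (K_HF (hp i)) (HF_exp hG h1 i (deg0_HF Ct)).
by rewrite mul0rn addr0.
Qed.

Lemma unit_A (p q : {poly F}) : pover A p -> pover A q -> p.[t] * q.[t] = 1 -> A p.[t].
Proof.
move=> hp hq e.
have pq : p * q = 1.
  apply/eqP; rewrite -subr_eq0; apply/eqP; apply: Atr.
    by apply: (srB (pover_ring hA)); [apply: (srM (pover_ring hA)) | apply: (sr1 (pover_ring hA))].
  by rewrite hornerD hornerN hornerM e hornerC subrr.
have p0 : p != 0 by apply: contra_eq_neq pq => ->; rewrite mul0r eq_sym oner_neq0.
have q0 : q != 0 by apply: contra_eq_neq pq => ->; rewrite mulr0 eq_sym oner_neq0.
have := size_mul p0 q0; rewrite pq size_poly1.
have := size_poly_gt0 p; have := size_poly_gt0 q; rewrite p0 q0 => sq sp es.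
have : (size p <= 1)%N by move: es sp sq; rewrite -subn1; move: (size p) (size q) => a b; lia.
by move/size1_polyC ->; rewrite hornerC.
Qed.

Lemma k_K a : k a -> K (iota a).
Proof.
move=> ka.
have d0a : forall b, k b -> deg0_loc Bd f (iota b).
  move=> b kb; exists 0%N, b, 0; split; first exact: (field_deg0 hG hk h1).
    by rewrite expr0; apply: h1.
  by rewrite expr0 divr1.
case: (eqVneq a 0) => [->|a0].
  by rewrite rmorph0; apply: A_K; apply: (sr0 hA).
case: hk => _ /(_ a ka a0) [au kai].
case/Ciff: (d0a _ ka) => p [hp ep].
case/Ciff: (d0a _ kai) => q [hq eq].
apply: A_K; rewrite ep; apply: (unit_A hp hq).
by rewrite -ep -eq -rmorphM mulrV // rmorph1.
Qed.

Definition Pdeg (n : nat) := (0 < n)%N /\ exists z : F, z != 0 /\ HF Bd n%:Z z.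

Lemma Pdeg_ex : exists n, Pdeg n.
Proof.
case: d d0 hfd => n dn hf.
  exists n; split; first by lia.
  by exists (iota f); split; [rewrite tofrac_eq0 | exact: (HF_hom h1 hf)].
exists n.+1; split => //.
exists (iota f)^-1; split; first by rewrite invr_neq0 // tofrac_eq0.
by have := HF_inv hG h1 (HF_hom h1 hf); rewrite NegzE opprK.
Qed.

Variables (e : nat) (g : F).
Hypotheses (e0 : (0 < e)%N) (g0 : g != 0) (hg : HF Bd e%:Z g)
  (emin : forall m, Pdeg m -> (e <= m)%N).

Lemma hf_decomp m z : z != 0 -> HF Bd m z -> exists q w, HF Bd 0 w /\ z = w * g ^ q.
Proof.
move=> z0 hz.
set q := (m %/ e%:Z)%Z; set r := (m %% e%:Z)%Z.
have em : m = q * e%:Z + r by apply: divz_eq.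
have e0' : e%:Z != 0 by lia.
have r0 : 0 <= r by apply: modz_ge0.
have re : r < e%:Z by apply: ltz_pmod; lia.
set w := z * g ^ (- q).
have hw : HF Bd r w.
  have := HF_mul hG hz (HF_expz hG h1 (- q) hg).
  by have -> : m + e%:Z * - q = r by rewrite {1}em; ring.
have w0 : w != 0 by rewrite mulf_neq0 // expfz_neq0.
exists q, w; split.
  case: (eqVneq r 0) => [r0'|rn]; first by rewrite -r0'.
  exfalso.
  have : Pdeg (absz r).
    split; first by lia.
    by exists w; split => //; rewrite abszE ger0_norm.
  by move/emin; lia.
by rewrite /w -mulrA -expfzDr // addNr expr0z mulr1.
Qed.

Lemma D0_frac w : HF Bd 0 w -> exists c1 c2,
  [/\ deg0_loc Bd f c1, deg0_loc Bd f c2, c2 != 0 & w = c1 / c2].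
Proof.
move=> [a [b [e1 [e2 [ha hb b0 ee ->]]]]].
have e12 : e1 = e2 by lia.
subst e1.
case: (arith e2 d0) => L [M hLM].
set N := absz d.
have N0 : (0 < N)%N by rewrite absz_gt0.
have hN : N = N.-1.+1 by rewrite prednK.
have toZ : forall (x : int) (n : nat), x *+ n = x * n%:Z.
  by move=> x n; rewrite -mulr_natr natz.
have hfM : Bd (d *+ M) (f ^+ M) by exact: (BdX hG M h1 hfd).
have deg2 : Bd (d *+ M) (b ^+ N * f ^+ L).
  have := BdM hG (BdX hG N h1 hb) (BdX hG L h1 hfd).
  by rewrite !toZ hLM.
have hN' : (N%:Z) = (N.-1)%:Z + 1 by rewrite {1}hN; lia.
have E : e2 + e2 * (N.-1)%:Z + d * L%:Z = d * M%:Z by rewrite -hLM hN'; ring.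
have deg1 : Bd (d *+ M) (a * b ^+ N.-1 * f ^+ L).
  have := BdM hG (BdM hG ha (BdX hG N.-1 h1 hb)) (BdX hG L h1 hfd).
  by rewrite !toZ E.
exists (iota (a * b ^+ N.-1 * f ^+ L) / iota f ^+ M),
       (iota (b ^+ N * f ^+ L) / iota f ^+ M); split.
- by exists M, (a * b ^+ N.-1 * f ^+ L), (d *+ M).
- by exists M, (b ^+ N * f ^+ L), (d *+ M).
- by rewrite mulf_neq0 ?invr_neq0 ?expf_neq0 ?tofrac_eq0 // mulf_neq0 ?expf_neq0.
have ib : iota b != 0 by rewrite tofrac_eq0.
have iff : iota f != 0 by rewrite tofrac_eq0.
have ea : a * b ^+ N.-1 * f ^+ L = a * (b ^+ N.-1 * f ^+ L) by rewrite mulrA.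
have eb : b ^+ N * f ^+ L = b * (b ^+ N.-1 * f ^+ L) by rewrite mulrA -exprS -hN.
rewrite ea eb !rmorphM; apply: frac_simpl => //.
- by rewrite -rmorphM tofrac_eq0 mulf_neq0 // expf_neq0.
- by rewrite expf_neq0.
Qed.

Local Notation RFt := (RF K t g).

Lemma RF_C c : deg0_loc Bd f c -> RFt c.
Proof.
case/Ciff => p [hp ->].
rewrite -(@eval2Cp _ t g p); apply: (@RF_eval _ K t g K_subfield).
have hp' : pover K p by move=> i; exact: A_K.
exact: (poverC (pover_ring (@hKr _ K K_subfield)) hp').
Qed.

Lemma RF_D0 w : HF Bd 0 w -> RFt w.
Proof.
case/D0_frac => c1 [c2 [h1' h2 _ ->]].
by apply: (@RF_mul _ K t g K_subfield); [apply: RF_C | apply: (@RF_inv _ K t g K_subfield); apply: RF_C].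
Qed.

Lemma RF_HF m z : HF Bd m z -> RFt z.
Proof.
move=> hz; case: (eqVneq z 0) => [->|z0].
  by apply: (@RF_K _ K t g K_subfield); apply: (sr0 (@hKr _ K K_subfield)).
case: (hf_decomp z0 hz) => q [w [hw ->]].
apply: (@RF_mul _ K t g K_subfield); first exact: RF_D0.
by apply: (@RF_expz _ K t g K_subfield); apply: (@RF_y _ K t g K_subfield).
Qed.

Lemma RF_iota b : RFt (iota b).
Proof.
case: hG => _ _ hdec _; case: (hdec b) => s [c [_ hc ->]].
rewrite rmorph_sum; apply: (@RF_sum _ K t g K_subfield) => n _.
exact: (RF_HF (HF_hom h1 (hc n))).
Qed.

Lemma RF_all z : RFt z.
Proof.
case: (frac_repr z) => a [b [_ ->]].
apply: (@RF_mul _ K t g K_subfield); first exact: RF_iota.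
apply: (@RF_inv _ K t g K_subfield); exact: RF_iota.
Qed.

Lemma K_poly_clear p : pover K p -> exists D, [/\ A D, D != 0 & pover A (D *: p)].
Proof.
elim/poly_ind: p => [|p c IH] hp.
  exists 1; split; [exact: (sr1 hA) | exact: oner_neq0 |].
  by move=> i; rewrite scaler0 coef0; apply: (sr0 hA).
have hp' : pover K p.
  by move=> i; have := hp i.+1; rewrite coefD coefMX coefC /= addr0.
have hc : K c by have := hp 0%N; rewrite coefD coefMX coefC /= add0r.
case: (IH hp') => D1 [hD1 D10 hD1p].
case: hc => a [b [ha hb b0 ec]].
exists (D1 * b); split; [exact: (srM hA) | by rewrite mulf_neq0 |].
case=> [|i]; rewrite coefZ coefD coefMX coefC /=.
  by rewrite add0r ec -mulrA [b * _]mulrC divfK //; apply: (srM hA).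
rewrite addr0 mulrAC; apply: (srM hA) => //.
by have := hD1p i; rewrite coefZ.
Qed.

Lemma K_poly_zero p : pover K p -> p.[t] = 0 -> p = 0.
Proof.
move=> hp pt; case: (K_poly_clear hp) => D [hD D0 hDp].
have := Atr hDp; rewrite hornerZ pt mulr0 => /(_ erefl) /eqP.
by rewrite scale_poly_eq0 (negPf D0) /= => /eqP.
Qed.

Lemma indep P : coefs_in K P -> eval2 P t g = 0 -> P = 0.
Proof.
move=> hP e2.
have ex : eval2 P t g = \sum_(i < size P) ((P`_i).[t] * g ^+ i).
  rewrite /eval2 (horner_coef P) horner_sum; apply: eq_bigr => i _.
  by rewrite hornerM horner_exp hornerC.
rewrite ex in e2.
have hz : forall i, (i < size P)%N -> HF Bd (e%:Z *+ i) ((P`_i).[t] * g ^+ i).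
  move=> i _; have := HF_mul hG (pK_HF (hP i)) (HF_exp hG h1 i hg).
  by rewrite add0r.
have im : forall i j, (i < size P)%N -> (j < size P)%N -> e%:Z *+ i = e%:Z *+ j -> i = j.
  move=> i j _ _; rewrite -[_ *+ i]mulr_natr -[_ *+ j]mulr_natr !natz => h; nia.
have := HF_indep hG h1 hz im e2.
move=> hi; apply/polyP => i; rewrite coef0.
case: (ltnP i (size P)) => hs; last exact: nth_default.
apply: K_poly_zero; first exact: hP.
by move: (hi i hs) => /eqP; rewrite mulf_eq0 expf_eq0 (negPf g0) andbF orbF => /eqP.
Qed.

End Main.

Unset Implicit Arguments.

Theorem proposition1p3 (B : idomainType) (Bd : int -> B -> Prop) (k : B -> Prop) :
  is_Zgrading Bd -> subfield_set k ->
  (exists f : B, cylindrical Bd f) ->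
  exists K : Frac B -> Prop,
    [/\ subfield_set K,
        (forall a : B, k a -> K (frac_of a)) &
        purely_transc_deg2 K].
Proof.
move=> hG hk [f [f0 [d [d0 hfd]] [A [t [hA AC Ct Ciff Atr]]]]].
have h1' : Bd 0 1 by apply: (Bd1 hG); exists f, d.
have [e [[e0 [g [g0 hg]]] emin]] := ex_min (Pdeg_ex hG f0 d0 hfd).
exists (K A); split.
- exact: (K_subfield hA).
- move=> a ka; exact: (k_K hG hk f0 d0 hfd hA Ciff Atr ka).
exists t, g; split.
- move=> P hP ev.
  exact: (indep hG f0 d0 hfd hA AC Ct Atr e0 g0 hg hP ev).
- move=> z.
  exact: (RF_all hG f0 d0 hfd hA Ciff e0 g0 hg emin z).
Qed.
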